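(* Let $a:\mathbb R^d\to\mathcal S_d^+$ be continuous with $\|a(x)\|\le\Lambda$ and $\operatorname{Tr}a(x)\ge\lambda$ for all $x$, and assume the martingale problem for $L$ is well-posed, with solutions $(\mathbb P^x)_{x\in\mathbb R^d}$. Let $(x_n)_{n\ge1}$ be a dense sequence in $\mathbb R^d$ and define the measure $\mathfrak m(B):=\sum_{n\ge1}2^{-n}R_1\mathbf 1_B(x_n)$ for Borel $B\subset\mathbb R^d$. If $B$ is a Borel set with $\mathfrak m(B)=0$, then $\mathbb R^d\setminus B$ is dense in $\mathbb R^d$.
   Context: Fix $d\ge1$, $\alpha\in(0,2)$, $\lambda,\Lambda>0$. $\mathcal S_d^+$: symmetric non-negative definite real $d\times d$ matrices, $\|a\|=\sum|a_{ij}|$. $Lu(x)=\frac12\int_{\mathbb R^d}[u(x+z)+u(x-z)-2u(x)]\frac{\langle a(x)z,z\rangle}{|z|^{d+\alpha+2}}dz$ on $C_c^2(\mathbb R^d)$. $\mathcal D$: Skorokhod space of càdlàg paths, $X_t$ canonical process, $\mathcal F_t=\sigma(X_s,s\le t)$. Well-posedness: for every Borel probability $\nu$ on $\mathbb R^d$ a unique probability on $\mathcal D$ with $X_0\sim\nu$ and $f(X_t)-f(X_0)-\int_0^tLf(X_r)dr$ an $(\mathcal F_t)$-martingale for all $f\in C_c^\infty$; $\mathbb P^x$ the solution with $\nu=\delta_x$. $R_1f(x)=\mathbb E^x\int_0^\infty e^{-t}f(X_t)\,dt$ for bounded Borel $f$. *)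

(* Defs.v *)
From HB Require Import structures.
From mathcomp Require Import all_boot all_order all_algebra.
From mathcomp Require Import all_classical all_reals all_analysis.

Set Implicit Arguments.
Unset Strict Implicit.
Unset Printing Implicit Defensive.
Import Order.TTheory GRing.Theory Num.Theory.
Import numFieldNormedType.Exports.
Local Open Scope classical_set_scope.
Local Open Scope ring_scope.

Section Defs.
Context {R : realType} {d : nat}.

Notation vec := 'rV[R]_d.

Definition enorm (z : vec) : R := Num.sqrt (\sum_(i < d) z ord0 i ^+ 2).
Definition qform (A : 'M[R]_d) (z : vec) : R :=
  \sum_(i < d) \sum_(j < d) A i j * z ord0 i * z ord0 j.
Definition mxnorm1 (A : 'M[R]_d) : R := \sum_(i < d) \sum_(j < d) `|A i j|.
Definition psd_sym (A : 'M[R]_d) : Prop :=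
  A^T = A /\ forall z : vec, 0 <= qform A z.

Definition Rd := g_sigma_algebraType (@open vec).
HB.instance Definition _ := Pointed.on Rd.
HB.instance Definition _ := Measurable.on Rd.

(** Lebesgue integral on R^d, defined by iterated one-dimensional Lebesgue
    integration (Tonelli) of the positive and negative parts. *)
Fixpoint iint (n : nat) (g : (nat -> R) -> \bar R) : \bar R :=
  match n with
  | 0%N => g (fun _ => 0)
  | n'.+1 => integral (@lebesgue_measure R) setT
      (fun t : R => iint n' (fun y => g (fun k => if k == n' then t else y k)))
  end.
Definition lebint (g : vec -> R) : \bar R :=
  (iint d (fun y => (Num.max (g (\row_i y i)) 0)%:E)
   - iint d (fun y => (Num.max (- g (\row_i y i)) 0)%:E))%E.

Definition evec (i : 'I_d) : vec := delta_mx ord0 i.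
Definition iter_partial (s : seq 'I_d) (f : vec -> R) : vec -> R :=
  foldr (fun i g => derive g ^~ (evec i)) f s.
Definition smooth_c (f : vec -> R) : Prop :=
  (forall s : seq 'I_d, continuous (iter_partial s f) /\
     forall x i, derivable (iter_partial s f) x (evec i))
  /\ compact (closure [set x | f x != 0]).

Definition Lop (a : vec -> 'M[R]_d) (alpha : R) (f : vec -> R) (x : vec) : R :=
  2^-1 * fine (lebint (fun z =>
     (f (x + z) + f (x - z) - 2 * f x) * qform (a x) z
       / (enorm z `^ (d%:R + alpha + 2)))).

(** Skorokhod space of cadlag paths [0,oo) -> R^d; paths are extended to
    negative times by their value at 0, so that D is in bijection with the
    usual space of cadlag paths on [0, oo). *)
Definition cadlag (w : R -> vec) : Prop :=
  [/\ forall t, 0 <= t -> w s @[s --> t^'+] --> w t,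
      forall t, 0 < t -> exists l : vec, w s @[s --> t^'-] --> l
    & forall t, t < 0 -> w t = w 0].

Lemma cadlag_cst0 : cadlag (fun _ => 0).
Proof.
split.
- by move=> t _; exact: cvg_cst.
- by move=> t _; exists 0; exact: cvg_cst.
- by [].
Qed.

Record Dpath := MkDpath { dpath : R -> vec ; dpath_cadlag : cadlag dpath }.

HB.instance Definition _ := gen_eqMixin Dpath.
HB.instance Definition _ := gen_choiceMixin Dpath.
HB.instance Definition _ := isPointed.Build Dpath (MkDpath cadlag_cst0).

Definition X (t : R) (w : Dpath) : vec := dpath w t.

Definition gen_upto (t : R) : set (set Dpath) :=
  [set A | exists s (B : set Rd), [/\ 0 <= s <= t, measurable B & A = X s @^-1` B]].
Definition gen_all : set (set Dpath) :=
  [set A | exists s (B : set Rd), [/\ 0 <= s, measurable B & A = X s @^-1` B]].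
Definition Ft (t : R) : set (set Dpath) := <<s gen_upto t >>.

Definition Omega := g_sigma_algebraType gen_all.
HB.instance Definition _ := Pointed.on Omega.
HB.instance Definition _ := Measurable.on Omega.

Definition martingale (P : probability Omega R) (M : R -> Omega -> R) : Prop :=
  forall t, 0 <= t ->
    [/\ (forall B : set R, measurable B -> Ft t (M t @^-1` B)),
        P.-integrable setT (fun w => (M t w)%:E)
      & forall s (A : set Omega), 0 <= s <= t -> Ft s A ->
          (\int[P]_(w in A) (M t w)%:E = \int[P]_(w in A) (M s w)%:E)%E].

Definition MP_mart (a : vec -> 'M[R]_d) (alpha : R) (f : vec -> R)
  (t : R) (w : Omega) : R :=
  f (X t w) - f (X 0 w)
  - fine (\int[@lebesgue_measure R]_(r in `[0%R, t]%classic) (Lop a alpha f (X r w))%:E)%E.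

Definition solves_MP (a : vec -> 'M[R]_d) (alpha : R) (P : probability Omega R)
  (nu : set Rd -> \bar R) : Prop :=
  (forall B : set Rd, measurable B -> P (X 0 @^-1` B) = nu B) /\
  (forall f : vec -> R, smooth_c f -> martingale P (MP_mart a alpha f)).

Definition well_posed (a : vec -> 'M[R]_d) (alpha : R) : Prop :=
  forall nu : probability Rd R,
    (exists P, solves_MP a alpha P nu) /\
    (forall P Q, solves_MP a alpha P nu -> solves_MP a alpha Q nu ->
       forall A : set Omega, measurable A -> P A = Q A).

Definition R1ind (Px : vec -> probability Omega R) (B : set vec) (x : vec)
  : \bar R :=
  (\int[Px x]_w \int[@lebesgue_measure R]_(t in `[0%R, +oo[%classic)
       (expR (- t) * \1_B (X t w))%:E)%E.

(** the measure m(B) = sum_{n>=1} 2^-n R_1 1_B (x_n), with x_n = xs n.-1 *)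
Definition frak_m (Px : vec -> probability Omega R) (xs : nat -> vec)
  (B : set vec) : \bar R :=
  (\sum_(0 <= n <oo) ((2%:R ^- n.+1)%:E * R1ind Px B (xs n)))%E.

End Defs.

(* Main.v *)
Require Import Defs.
From HB Require Import structures.
From mathcomp Require Import all_boot all_order all_algebra.
From mathcomp Require Import all_classical all_reals all_analysis.
Import Order.TTheory GRing.Theory Num.Theory Num.Def.
Import numFieldNormedType.Exports.
Local Open Scope classical_set_scope.
Local Open Scope ring_scope.

Lemma int_lb d (T : measurableType d) (R : realType) (mu : {measure set T -> \bar R})
  (D A : set T) (f : T -> \bar R) (c : R) : measurable A -> 0 <= c -> A `<=` D ->
  (forall x, D x -> (0 <= f x)%E) -> (forall x, A x -> (c%:E <= f x)%E) ->
  (c%:E * mu A <= \int[mu]_(x in D) f x)%E.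
Proof.
move=> mA c0 AD f0 fA.
rewrite ge0_integralE//.
apply: ereal_sup_ubound; exists (scale_nnsfun (indic_nnsfun R mA) c0).
  move=> x /=; rewrite /patch measurable_realfun.mindicE; case: ifPn => [|/negP].
    rewrite inE => Dx; idtac; case: (boolP (x \in A)) => [xA|_].
      by rewrite mulr1; apply: fA; rewrite -inE.
    by rewrite mulr0; exact: f0.
  rewrite inE => nD; rewrite memNset ?mulr0// => Ax; exact/nD/AD.
rewrite /scale_nnsfun /=.
by rewrite sintegralrM sintegral_indic.
Qed.
Lemma right_open (R : realType) (T : topologicalType) (w : R -> T) t (V : set T) :
  w s @[s --> t^'+] --> w t -> open V -> V (w t) ->
  exists2 e, 0 < e & forall s, t < s < t + e -> V (w s).
Proof.
move=> cw oV Vt.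
have : (w @ t^'+) V by apply: cw; apply: open_nbhs_nbhs; split.
move=> /nbhs_ballP [e /= e0 H]; exists e => // s /andP[ts se].
apply: H => //=.
rewrite -ball_normE /ball_ /= ltr_distlC; apply/andP; split => //.
by rewrite (le_lt_trans _ ts)// lerBlDr lerDl ltW.
Qed.
Lemma small_inv (R : realType) (g : R) : 0 < g -> exists j : nat, j.+1%:R^-1 < g.
Proof.
move=> g0; exists (truncn (g^-1)).
rewrite -[in ltRHS](invrK g) ltf_pV2 ?posrE ?invr_gt0 ?ltr0n//.
exact: truncnS_gt.
Qed.

Lemma rat_between (R : realType) (t g : R) : 0 <= t -> 0 < g ->
  exists i j : nat, t < i%:R / j.+1%:R < t + g.
Proof.
move=> t0 g0; have [j jg] := small_inv _ _ g0.
exists (truncn (t * j.+1%:R)).+1, j.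
have jp : 0 < j.+1%:R :> R by rewrite ltr0n.
have /andP[h1 h2] : (truncn (t * j.+1%:R))%:R <= t * j.+1%:R < (truncn (t * j.+1%:R)).+1%:R.
  by apply: truncn_itv; rewrite mulr_ge0// ltW.
apply/andP; split.
  by rewrite ltr_pdivlMr.
rewrite ltr_pdivrMr// mulrDl (@le_lt_trans _ _ (t * j.+1%:R + 1))//.
  by rewrite -natr1 lerD2r.
by rewrite ltrD2l -ltr_pdivrMr// mul1r.
Qed.

Arguments right_open {R T w t V}.
Arguments small_inv {R g}.
Arguments rat_between {R t g}.

Section Main.
Context {R : realType} {d : nat}.
Notation vec := 'rV[R]_d.

Definition qs (i j : nat) : R := i%:R / j.+1%:R.
Definition rk (k : nat) : R := k.+1%:R^-1.
Definition Ek (C : set vec) (k : nat) : set (@Omega R d) :=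
  \bigcap_i \bigcap_j [set w | qs i j <= rk k -> C (X (qs i j) w)].

Lemma qs_ge0 i j : 0 <= qs i j.
Proof. by rewrite /qs divr_ge0. Qed.

Lemma measX (C : set vec) t : closed C -> 0 <= t ->
  measurable (X t @^-1` C : set (@Omega R d)).
Proof.
move=> cC t0; apply: sub_sigma_algebra; exists t, C; split => //.
rewrite -[C]setCK; apply: measurableC; apply: sub_sigma_algebra.
exact: closed_openC.
Qed.

Lemma Ek_meas C k : closed C -> measurable (Ek C k).
Proof.
move=> cC; apply: bigcapT_measurable => i; apply: bigcapT_measurable => j.
have [h|h] := boolP (qs i j <= rk k).
  rewrite (_ : [set w | _] = X (qs i j) @^-1` C); first exact: measX (qs_ge0 i j).
  by apply/seteqP; split => w /=; [apply|].
rewrite (_ : [set w | _] = setT) //.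
by apply/seteqP; split => w.
Qed.

Lemma Ek_cover (C V : set vec) (w : @Omega R d) : open V -> V `<=` C ->
  V (X 0 w) -> exists k, Ek C k w.
Proof.
move=> oV VC V0; have [rc _ _] := dpath_cadlag w.
have [e e0 He] := right_open (rc 0 (lexx 0)) oV V0.
have [k ke] := small_inv e0; exists k => i _ j _ /= qr.
apply: VC; have := qs_ge0 i j; rewrite le_eqVlt => /orP[/eqP q0|q0].
  by rewrite -q0.
apply: He; rewrite q0 add0r /=.
by apply: le_lt_trans qr ke.
Qed.

Lemma Ek_path (C : set vec) k (w : @Omega R d) t : closed C -> Ek C k w ->
  0 <= t < rk k -> C (X t w).
Proof.
move=> cC E /andP[t0 tr]; apply: contrapT => nC.
have [rc _ _] := dpath_cadlag w.
have [e e0 He] := right_open (rc t t0) (closed_openC cC) nC.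
have g0 : 0 < Num.min e (rk k - t) by rewrite lt_min e0 subr_gt0.
have [i [j /andP[tq qg]]] := rat_between t0 g0.
apply: (He (qs i j)).
  rewrite tq /=; apply: (lt_le_trans qg); rewrite lerD2l; by rewrite ge_min lexx.
apply: (E i I j I) => /=.
apply: ltW; apply: (lt_le_trans qg).
rewrite -lerBrDl; by rewrite ge_min lexx orbT.
Qed.

Lemma rk_gt0 k : 0 < rk k. Proof. by rewrite /rk invr_gt0 ltr0n. Qed.
Lemma rk_le1 k : rk k <= 1. Proof. by rewrite /rk invf_le1 ?ltr0n// ler1n. Qed.

Lemma inner_lb (B C : set vec) k (w : @Omega R d) : C `<=` B -> closed C -> Ek C k w ->
  ((expR (-1) * rk k)%:E <= \int[@lebesgue_measure R]_(t in `[0%R, +oo[%classic)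
       (expR (- t) * \1_B (X t w))%:E)%E.
Proof.
move=> CB cC E.
have sub : `[0%R, rk k[%classic `<=` `[0%R, +oo[%classic.
  by move=> t /=; rewrite !in_itv /= => /andP[->].
have f0 : forall t, `[0%R, +oo[%classic t -> (0 <= (expR (- t) * \1_B (X t w))%:E)%E.
  by move=> t _; rewrite lee_fin mulr_ge0 ?expR_ge0.
have fA : forall t, `[0%R, rk k[%classic t -> ((expR (-1))%:E <= (expR (- t) * \1_B (X t w))%:E)%E.
  move=> t /=; rewrite in_itv /= => /andP[t0 tr].
  rewrite indicE mem_set ?mulr1; last by apply: CB; apply: (Ek_path _ _ _ _ cC E); rewrite t0 tr.
  rewrite lee_fin ler_expR lerN2; apply: ltW; apply: lt_le_trans tr (rk_le1 k).
have := @int_lb _ _ _ (@lebesgue_measure R) _ _ _ _ (measurable_itv `[0%R, rk k[) (expR_ge0 (-1)) sub f0 fA.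
move=> H; apply: le_trans H.
have L : (@lebesgue_measure R `[0%R, rk k[%classic) = (rk k)%:E.
  by rewrite lebesgue_measure_itv /= lte_fin rk_gt0 /= oppr0 adde0.
rewrite EFinM -L; exact: le_refl.
Qed.

Lemma R1_lb (Px : vec -> probability (@Omega R d) R) (B C : set vec) x k :
  C `<=` B -> closed C ->
  ((expR (-1) * rk k)%:E * Px x (Ek C k) <= R1ind Px B x)%E.
Proof.
move=> CB cC; rewrite /R1ind.
have c0 : 0 <= expR (-1) * rk k :> R by rewrite mulr_ge0 ?expR_ge0 ?ltW ?rk_gt0.
apply: (@int_lb _ _ _ (Px x) setT (Ek C k) _ _ (Ek_meas _ _ cC) c0) => //.
- move=> w _; apply: integral_ge0 => t _.
  by rewrite lee_fin mulr_ge0 ?expR_ge0.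
by move=> w E; apply: (inner_lb _ _ _ _ CB cC E).
Qed.

Lemma measX_open (V : set vec) t : open V -> 0 <= t ->
  measurable (X t @^-1` V : set (@Omega R d)).
Proof.
move=> oV t0; apply: sub_sigma_algebra; exists t, V; split => //.
exact: sub_sigma_algebra.
Qed.

Lemma exists_pos (P : probability (@Omega R d) R) (C V : set vec) :
  open V -> V `<=` C -> closed C -> P (X 0 @^-1` V) = 1%E ->
  exists k, (0 < P (Ek C k))%E.
Proof.
move=> oV VC cC P1; apply: contrapT => nE.
have E0 : forall k, P (Ek C k) = 0%E.
  move=> k; apply/eqP; rewrite eq_le measure_ge0 andbT leNgt; apply/negP => h.
  by apply: nE; exists k.
have H1 : (P (X 0 @^-1` V) <= \sum_(k <oo) P (Ek C k))%E.
  apply: measure_sigma_subadditive.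
  - by move=> k; exact: Ek_meas.
  - exact: measX_open.
  by move=> w /= Vw; have [k Ek] := Ek_cover _ _ w oV VC Vw; exists k.
have S0 : (\sum_(k <oo) P (Ek C k) = 0)%E by apply: eseries0 => k _ _; exact: E0.
by move: H1; rewrite S0 P1 lee_fin ler10.
Qed.

Lemma R1_ge0 (Px : vec -> probability (@Omega R d) R) (B : set vec) x :
  (0 <= R1ind Px B x)%E.
Proof.
apply: integral_ge0 => w _; apply: integral_ge0 => t _.
by rewrite lee_fin mulr_ge0 ?expR_ge0.
Qed.

End Main.

Theorem propositionB1 (R : realType) (d : nat) (alpha lam Lam : R)
  (a : 'rV[R]_d -> 'M[R]_d)
  (Px : 'rV[R]_d -> probability (@Omega R d) R)
  (xs : nat -> 'rV[R]_d) (B : set (@Rd R d)) :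
  (1 <= d)%N -> 0 < alpha < 2 -> 0 < lam -> 0 < Lam ->
  continuous a ->
  (forall x, psd_sym (a x)) ->
  (forall x, mxnorm1 (a x) <= Lam) ->
  (forall x, lam <= \tr (a x)) ->
  well_posed a alpha ->
  (forall x, solves_MP a alpha (Px x) (@dirac _ (@Rd R d) (x : @Rd R d) R)) ->
  dense (range xs) ->
  measurable B ->
  frak_m Px xs B = 0%E ->
  dense (~` (B : set 'rV[R]_d)).
Proof.
move=> _ _ _ _ _ _ _ _ _ hMP dxs mB hm O O0 oO.
apply: contrapT => nOB.
have OB : O `<=` B.
  by move=> y Oy; apply: contrapT => nBy; apply: nOB; exists y.
have [y [Oy [n _ yE]]] := dxs O O0 oO; subst y.
have /nbhs_ballP[e /= e0 Hb] : nbhs (xs n) O by apply: open_nbhs_nbhs.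
have e20 : 0 < e / 2 by rewrite divr_gt0.
pose V := ball (xs n) (e / 2).
pose C := closed_ball (xs n) (e / 2).
have oV : open V by exact: ball_open.
have VC : V `<=` C by exact: subset_closed_ball.
have cC : closed C by exact: closed_ball_closed.
have CB : C `<=` B.
  by move=> y /(subset_closure_half e0) /Hb /OB.
have P1 : Px (xs n) (X 0 @^-1` V) = 1%E.
  rewrite (hMP (xs n)).1; last exact: sub_sigma_algebra.
  by rewrite diracE mem_set//; exact: ballxx.
have [k Pk] := exists_pos _ _ _ oV VC cC P1.
have R1p : (0 < R1ind Px B (xs n))%E.
  apply: lt_le_trans (R1_lb Px B C (xs n) k CB cC).
  by rewrite mule_gt0// lte_fin mulr_gt0 ?expR_gt0 ?rk_gt0.
have : (0 < frak_m Px xs B)%E.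
  rewrite /frak_m; apply: (lt_le_trans _ (nneseries_lim_ge n.+1 _)).
    rewrite big_nat_recr//=.
    apply: (@lt_le_trans _ _ ((2%:R ^- n.+1)%:E * R1ind Px B (xs n))%E).
      by rewrite mule_gt0// lte_fin invr_gt0 exprn_gt0.
    apply: lee_paddl => //.
    by apply: sume_ge0 => i _; rewrite mule_ge0 ?R1_ge0// lee_fin invr_ge0 exprn_ge0.
  by move=> i _ _; rewrite mule_ge0 ?R1_ge0// lee_fin invr_ge0 exprn_ge0.
by rewrite hm ltxx.
Qed.
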